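(* Let $n$ be a positive integer and let $a=(a_1,\ldots,a_n)$, $b=(b_1,\ldots,b_n)$ be vectors of nonnegative integers with $0\le a_k\le b_k$ for all $k\in[n]$. Then for all $j\in[n]$, \[\mathsf{invol}_j(b)\le \mathsf{invol}_j(a)\,n^{\|b-a\|_1}\prod_{k=1}^n\exp\!\left(\frac{b_k^2}{2k}\right),\] where $\|b-a\|_1=\sum_{k=1}^n|b_k-a_k|$.
   Context: For a vector $a$ of nonnegative integers and $m\ge1$ (with $m$ at most the length of $a$), $\mathsf{invol}_m(a)=\left(\prod_{k=1}^m k^{a_k}\right)\prod_{k=1}^m\sum_{j=0}^{\lfloor a_k/2\rfloor}\frac{(a_k)_{2j}}{(2k)^j j!}$, where $(x)_r=x(x-1)\cdots(x-r+1)$. *)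

(* Defs.v *)
From HB Require Import structures.
From mathcomp Require Import all_boot all_order all_algebra.
From mathcomp Require Import reals sequences.
Set Implicit Arguments. Unset Strict Implicit. Unset Printing Implicit Defensive.
Import Order.TTheory GRing.Theory Num.Theory.
Local Open Scope ring_scope.

(* Vectors a = (a_1,...,a_n) are represented as functions a : nat -> nat,
   using 1-based indices; only the values a 1, ..., a n matter. *)

Definition invol (R : realType) (m : nat) (a : nat -> nat) : R :=
  (\prod_(1 <= k < m.+1) ((k%:R : R) ^+ a k)) *
  \prod_(1 <= k < m.+1)
     \sum_(0 <= j < (a k)./2.+1)
        (((a k) ^_ (2 * j))%:R / (((2 * k) ^ j * j`!)%:R)).

(* Main.v *)
Require Import Defs.
From HB Require Import structures.
From mathcomp Require Import all_boot all_order all_algebra.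
From mathcomp Require Import reals sequences exp.
From mathcomp Require Import ring lra.
Import Order.TTheory GRing.Theory Num.Theory.
Local Open Scope ring_scope.

Lemma ffact_le_exp (x m : nat) : (x ^_ m <= x ^ m)%N.
Proof.
suff H : forall y, (x <= y)%N -> (x ^_ m <= y ^ m)%N by apply: H.
elim: m x => [|m IH] x y xy; first by rewrite ffactn0 expn0.
rewrite ffactnS expnS leq_mul // IH //.
exact: leq_trans (leq_pred _) xy.
Qed.

Lemma expR_partial (R : realType) (y : R) N : 0 <= y ->
  \sum_(0 <= i < N) y ^+ i / i`!%:R <= expR y.
Proof.
move=> y0.
have -> : \sum_(0 <= i < N) y ^+ i / i`!%:R = series (exp_coeff y) N by [].
apply: nondecreasing_cvgn_le; last exact: is_cvg_series_exp_coeff.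
apply: nondecreasing_series => n _ _; exact: exp_coeff_ge0.
Qed.

Lemma S_le (R : realType) (x k : nat) : (0 < k)%N ->
  \sum_(0 <= j < x./2.+1) ((x ^_ (2 * j))%:R / (((2 * k) ^ j * j`!)%:R) : R)
  <= expR ((x ^ 2)%:R / (2 * k)%:R).
Proof.
move=> k0; apply: le_trans (@expR_partial R ((x ^ 2)%:R / (2 * k)%:R) x./2.+1 _); last first.
  by rewrite divr_ge0.
apply: ler_sum => j _.
have hk : 0 < ((2 * k) ^ j * j`!)%:R :> R by rewrite ltr0n muln_gt0 expn_gt0 muln_gt0 k0 fact_gt0.
rewrite ler_pdivrMr //.
have h2 : (2 * k)%:R != 0 :> R by rewrite pnatr_eq0 -lt0n muln_gt0 k0.
have hf : j`!%:R != 0 :> R by rewrite pnatr_eq0 -lt0n fact_gt0.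
have E : forall X K F : R, K != 0 -> F != 0 -> (X / K) ^+ j / F * (K ^+ j * F) = X ^+ j.
  move=> X K F hK hF; have hKj : K ^+ j != 0 by rewrite expf_neq0.
  rewrite expr_div_n; move: (K ^+ j) hKj => Kj hKj; field; by rewrite hKj hF.
rewrite [((2 * k) ^ j * _)%:R]natrM [((2 * k) ^ j)%:R]natrX E // -natrX -expnM.
by rewrite ler_nat ffact_le_exp.
Qed.

Lemma S_ge1 (R : realType) (x k : nat) :
  1 <= \sum_(0 <= j < x./2.+1) ((x ^_ (2 * j))%:R / (((2 * k) ^ j * j`!)%:R) : R).
Proof.
rewrite big_nat_recl //= muln0 ffactn0 expn0 fact0 divr1 lerDl.
by apply: sumr_ge0 => i _; rewrite divr_ge0.
Qed.

Lemma prod_ge1 (R : realType) (r : seq nat) (F : nat -> R) :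
  (forall i, 1 <= F i) -> 1 <= \prod_(i <- r) F i.
Proof.
move=> H; elim/big_ind: _ => // u v hu hv; exact: mulr_ege1.
Qed.

Theorem lemma5p3 (R : realType) (n : nat) (a b : nat -> nat) :
  (0 < n)%N ->
  (forall k, (1 <= k <= n)%N -> (a k <= b k)%N) ->
  forall j, (1 <= j <= n)%N ->
    invol R j b <=
      invol R j a * (n%:R ^+ (\sum_(1 <= k < n.+1) (b k - a k))%N) *
      \prod_(1 <= k < n.+1) expR (((b k) ^ 2)%:R / (2 * k)%:R).
Proof.
move=> n0 ab j /andP[j1 jn].
set S := fun (x k : nat) => \sum_(0 <= j < x./2.+1) ((x ^_ (2 * j))%:R / (((2 * k) ^ j * j`!)%:R) : R).
set E := fun k : nat => expR (((b k) ^ 2)%:R / (2 * k)%:R) : R.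
have hP : \prod_(1 <= k < j.+1) ((k%:R : R) ^+ b k) <=
   \prod_(1 <= k < j.+1) ((k%:R : R) ^+ a k) * n%:R ^+ (\sum_(1 <= k < j.+1) (b k - a k))%N.
  rewrite -prodrXr -big_split /=.
  rewrite big_nat [X in _ <= X]big_nat; apply: ler_prod => k /andP[k1 kj].
  have kn : (k <= n)%N by apply: leq_trans jn.
  rewrite exprn_ge0 //= -(subnKC (ab k _)); last by rewrite k1.
  rewrite exprD addKn ler_wpM2l ?exprn_ge0 //.
  by apply: lerXn2r; rewrite ?nnegrE ?ler0n // ler_nat.
have hQ : \prod_(1 <= k < j.+1) S (b k) k <= \prod_(1 <= k < j.+1) S (a k) k * \prod_(1 <= k < j.+1) E k.
  rewrite -big_split /= big_nat [X in _ <= X]big_nat; apply: ler_prod => k /andP[k1 kj].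
  apply/andP; split; first by apply: le_trans (S_ge1 _ _ _).
  rewrite /S /E.
  apply: le_trans (@S_le R (b k) k k1) _.
  rewrite -[X in X <= _]mul1r ler_wpM2r //; first exact: expR_ge0.
  exact: S_ge1.
have hN : n%:R ^+ (\sum_(1 <= k < j.+1) (b k - a k))%N <= n%:R ^+ (\sum_(1 <= k < n.+1) (b k - a k))%N :> R.
  apply: ler_weXn2l; first by rewrite ler1n.
  by rewrite (@big_cat_nat _ _ _ j.+1 1 n.+1) //= leq_addr.
have hE : \prod_(1 <= k < j.+1) E k <= \prod_(1 <= k < n.+1) E k.
  rewrite (@big_cat_nat _ _ _ j.+1 1 n.+1) //= ler_peMr //.
    by apply: prodr_ge0 => i _; exact: expR_ge0.
  apply: prod_ge1 => i; rewrite /E; apply: le_trans (expR_ge1Dx _); by rewrite lerDl divr_ge0.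
have -> : invol R j b = \prod_(1 <= k < j.+1) ((k%:R : R) ^+ b k) * \prod_(1 <= k < j.+1) S (b k) k by [].
have -> : invol R j a = \prod_(1 <= k < j.+1) ((k%:R : R) ^+ a k) * \prod_(1 <= k < j.+1) S (a k) k by [].
have Pge : forall c : nat -> nat, 0 <= \prod_(1 <= k < j.+1) ((k%:R : R) ^+ c k).
  by move=> c; apply: prodr_ge0 => i _; rewrite exprn_ge0.
have Sge : forall c : nat -> nat, 0 <= \prod_(1 <= k < j.+1) S (c k) k.
  by move=> c; apply: prodr_ge0 => i _; apply: le_trans (S_ge1 _ _ _).
have Ege : 0 <= \prod_(1 <= k < j.+1) E k by apply: prodr_ge0 => i _; exact: expR_ge0.
apply: le_trans (ler_pM (Pge b) (Sge b) hP hQ) _.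
rewrite mulrACA -[X in _ <= X]mulrA ler_wpM2l ?mulr_ge0 //.
apply: ler_pM => //; first by rewrite exprn_ge0.
Qed.
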